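(* Let $(\mathcal{L},\mathcal{D}(\mathcal{L}))$ be the generator of a $C_0$-contraction semigroup on a Banach space $\mathcal{X}$, $M\in\mathcal{B}(\mathcal{X})$ a contraction, and $P$ a projection with $\|M^n-P\|_\infty\le\delta^n$ for some $\delta\in(0,1)$ and all $n\in\mathbb{N}$. Assume there is $b\ge0$ such that $\|Pe^{t\mathcal{L}}(\mathbf{1}-P)\|_\infty\le tb$ and $\|(\mathbf{1}-P)e^{t\mathcal{L}}P\|_\infty\le tb$ for all $t\ge0$, and that $(P\mathcal{L}P,\mathcal{D}(\mathcal{L}P))$ is the generator of a $C_0$-semigroup. Then for all $n\in\mathbb{N}$ and all $x\in\mathcal{X}$ $$\Big\|\big(Me^{\frac1n\mathcal{L}}\big)^nx-\big(Pe^{\frac1n\mathcal{L}}P\big)^nx\Big\|\le\Big(\delta^n+\frac bn+\frac1n\,\frac{b(2+b)(\delta-\delta^n)}{1-\delta}e^{2b}\Big)\|x\|.$$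
   Context: $\mathcal{B}(\mathcal{X})$: bounded operators with operator norm $\|\cdot\|_\infty$; $\mathbf{1}$ the identity; contraction: norm at most $1$; projection: bounded idempotent. A $C_0$-contraction semigroup is a strongly continuous semigroup of contractions, denoted $e^{t\mathcal{L}}$ by its generator. $\mathcal{D}(\mathcal{L}P)=\{x:Px\in\mathcal{D}(\mathcal{L})\}$. *)

(* Defs.v *)
From HB Require Import structures.
From mathcomp Require Import all_boot all_order all_algebra.
From mathcomp Require Import all_classical all_reals all_analysis.
Set Implicit Arguments. Unset Strict Implicit. Unset Printing Implicit Defensive.
Import Order.TTheory GRing.Theory Num.Theory.
Import numFieldNormedType.Exports.
Local Open Scope classical_set_scope.
Local Open Scope ring_scope.

Section Defs.
Variables (R : realType) (X : completeNormedModType R).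

Definition is_linear_op (A : X -> X) : Prop :=
  forall (a : R) (x y : X), A (a *: x + y) = a *: A x + A y.

Definition is_bounded_op (A : X -> X) : Prop :=
  is_linear_op A /\ exists c : R, forall x, `|A x| <= c * `|x|.

Definition is_contraction_op (A : X -> X) : Prop :=
  is_bounded_op A /\ forall x, `|A x| <= `|x|.

Definition is_projection (P : X -> X) : Prop :=
  is_bounded_op P /\ forall x, P (P x) = P x.

Definition is_C0_semigroup (T : R -> X -> X) : Prop :=
  (forall t, 0 <= t -> is_bounded_op (T t)) /\
  (forall x, T 0 x = x) /\
  (forall s t x, 0 <= s -> 0 <= t -> T (s + t) x = T s (T t x)) /\
  (forall x, (fun h => T h x) @ 0^'+ --> x).

Definition is_C0_contraction_semigroup (T : R -> X -> X) : Prop :=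
  is_C0_semigroup T /\ (forall t, 0 <= t -> is_contraction_op (T t)).

Definition is_generator (T : R -> X -> X) (D : set X) (L : X -> X) : Prop :=
  (forall x, D x -> (fun h => h^-1 *: (T h x - x)) @ 0^'+ --> L x) /\
  (forall x, (exists l : X, (fun h => h^-1 *: (T h x - x)) @ 0^'+ --> l) -> D x).

End Defs.

(* Main.v *)
Set Warnings "-all".
Require Import Defs.
From HB Require Import structures.
From mathcomp Require Import all_boot all_order all_algebra.
From mathcomp Require Import all_classical all_reals all_analysis.
From mathcomp Require Import ring lra.
Import Order.TTheory GRing.Theory Num.Theory.
Import numFieldNormedType.Exports.
Local Open Scope classical_set_scope.
Local Open Scope ring_scope.

Lemma lin_props (R : realType) (X : completeNormedModType R) (A : X -> X) :
  is_linear_op A ->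
  [/\ A 0 = 0, forall x y, A (x + y) = A x + A y & forall x y, A (x - y) = A x - A y].
Proof.
move=> HA.
have H0 : A 0 = 0.
  have := HA 1 0 0; rewrite !scale1r addr0 => h.
  by have := congr1 (fun z => z - A 0) h; rewrite /= addrK subrr.
have HD : forall x y, A (x + y) = A x + A y.
  by move=> x y; have := HA 1 x y; rewrite !scale1r.
split=> // x y.
have := HA (-1) y x; rewrite !scaleN1r addrC => ->. by rewrite addrC.
Qed.

Local Open Scope ring_scope.
Lemma le0_of_geom (R : realType) (d a c : R) : 0 < d -> d < 1 -> 0 <= c ->
  (forall n : nat, (0 < n)%N -> a <= c * d ^+ n) -> a <= 0.
Proof.
move=> d0 d1 c0 H; rewrite leNgt; apply/negP => a0.
have z0 : 0 < a / (c + 1) by rewrite divr_gt0 // ltr_wpDl.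
have d1' : `|d| < 1 by rewrite ger0_norm ?ltW.
have [N _ HN] := @cvgr_lt _ _ _ _ _ 0 (cvg_expr d1') _ z0.
have := HN N.+1 (leqnSn N) => /= hd.
have := H N.+1 erefl => ha.
have : c * d ^+ N.+1 <= c * (a / (c+1)) by rewrite ler_wpM2l // ltW.
move=> h2; have h3 := le_trans ha h2.
have : c * (a / (c + 1)) < a.
  rewrite mulrA ltr_pdivrMr ?ltr_wpDl //. rewrite mulrC ltr_pM2l //. lra.
lra.
Qed.
Lemma core (R : realType) (X : completeNormedModType R) (M P T1 : X -> X) (d s : R)
  (n : nat) (x : X) :
  is_linear_op M -> is_linear_op P -> is_linear_op T1 ->
  (forall z, `|M z| <= `|z|) -> (forall z, `|T1 z| <= `|z|) -> (forall z, `|P z| <= `|z|) ->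
  (forall z, P (P z) = P z) -> (forall z, M (P z) = P z) -> (forall z, P (M z) = P z) ->
  (forall z, `|M z - P z| <= d * `|z|) ->
  (forall z, `|P (T1 (z - P z))| <= s * `|z|) ->
  (forall z, `|T1 (P z) - P (T1 (P z))| <= s * `|z|) ->
  0 < d -> d < 1 -> 0 <= s -> (0 < n)%N ->
  `|ssrnat.iter n (fun y => M (T1 y)) x - ssrnat.iter n (fun y => P (T1 (P y))) x|
   <= (d ^+ n + s + (2 * s + n%:R * s ^+ 2) * ((d - d ^+ n) / (1 - d))) * `|x|.
Proof.
move=> /lin_props[M0 MD MB] /lin_props[P0 PD PB] /lin_props[T0 TD TB].
move=> hM hT hP PP MP PM hN h1 h2 d0 d1 s0 n0.
set S := fun k : nat => (d - d ^+ k) / (1 - d).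
have d1' : 0 < 1 - d by lra.
have SS : forall k, S k.+1 = d + d * S k.
  move=> k; rewrite /S exprS; field; exact: lt0r_neq0.
have SS' : forall k, S k.+1 = S k + d ^+ k.
  move=> k; rewrite /S exprS; field; exact: lt0r_neq0.
have S1 : S 1 = 0 by rewrite /S expr1 subrr mul0r.
have Smono : forall k, (k <= n)%N -> S k <= S n.
  move=> k kn; rewrite /S ler_pM2r ?invr_gt0 // lerD2l lerN2.
  by apply: (ler_wiXn2l (ltW d0) (ltW d1)) kn.
have S0 : forall k, (0 < k)%N -> 0 <= S k.
  move=> k k0; apply: divr_ge0; last exact: ltW d1'.
  rewrite subr_ge0; exact: ler_iXnr k0 (ltW d0) (ltW d1).
set a := fun k => ssrnat.iter k (fun y => M (T1 y)) x.
set w := fun k => ssrnat.iter k (fun y => P (T1 (P y))) x.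
set v := fun k => a k - P (a k).
have ha : forall k, `|a k| <= `|x|.
  move=> i; elim: i => [|m IH] //=; apply: le_trans (hM _) _; exact: le_trans (hT _) IH.
have Pv : forall k, P (v k) = 0 by move=> k; rewrite /v PB PP subrr.
have av : forall k, a k = P (a k) + v k by move=> k; rewrite /v addrC subrK.
have hv : forall j, (0 < j)%N -> `|v j| <= (d ^+ j + s * S j) * `|x|.
  move=> i; elim: i => [|[|j] IH] // _.
    rewrite /v /= PM S1 mulr0 addr0 expr1.
    apply: le_trans (hN _) _; apply: ler_wpM2l; [exact: ltW d0|exact: hT].
  have -> : v j.+2 = (M (T1 (P (a j.+1)) - P (T1 (P (a j.+1))))
             - P (T1 (P (a j.+1)) - P (T1 (P (a j.+1)))))
            + (M (T1 (v j.+1)) - P (T1 (v j.+1))).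
    rewrite MB PB MP PP subrr subr0.
    rewrite {1}/v.
    have -> : a j.+2 = M (T1 (a j.+1)) by [].
    rewrite PM. rewrite {1 2}(av j.+1) TD MD PD. 
    by rewrite opprD addrACA.
  apply: le_trans (ler_normD _ _) _.
  have := IH erefl => IH'.
  have e1 := le_trans (hN _) (ler_wpM2l (ltW d0) (le_trans (h2 _) (ler_wpM2l s0 (ha j.+1)))).
  have e2 := le_trans (hN _) (ler_wpM2l (ltW d0) (le_trans (hT _) IH')).
  apply: le_trans (lerD e1 e2) _.
  rewrite (SS j.+1) (exprS d j.+1) le_eqVlt; apply/orP; left; apply/eqP; ring.
have hE : forall j, (j.+1 <= n)%N ->
    `|P (a j.+1) - P (w j.+1)| <= (s + s * S j.+1 + j%:R * s ^+ 2 * S n) * `|x|.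
  move=> i; elim: i => [|j IH] jn.
    have -> : P (a 1) - P (w 1) = P (T1 (x - P x)).
      by rewrite /a /w /= PM PP TB PB.
    rewrite S1 mulr0; apply: le_trans (h1 x) _; apply: ler_wpM2r => //; lra.
  have -> : P (a j.+2) - P (w j.+2) =
      P (T1 (P (a j.+1) - P (w j.+1))) + P (T1 (v j.+1 - P (v j.+1))).
    rewrite Pv subr0 TB PB.
    have -> : a j.+2 = M (T1 (a j.+1)) by [].
    have -> : w j.+2 = P (T1 (P (w j.+1))) by [].
    rewrite PM PP {1}(av j.+1) TD PD.
    by rewrite addrAC.
  apply: le_trans (ler_normD _ _) _.
  have e1 := le_trans (hP _) (le_trans (hT _) (IH (ltnW jn))).
  have e2 := le_trans (h1 _) (ler_wpM2l s0 (hv j.+1 erefl)).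
  apply: le_trans (lerD e1 e2) _.
  have hS := Smono j.+1 (ltnW jn).
  have hx : 0 <= `|x| by [].
  have Sn0 := S0 n n0.
  rewrite (SS' j.+1) -natr1.
  have : s * (s * S j.+1 * `|x|) <= s * (s * S n * `|x|).
    by apply: ler_wpM2l => //; apply: ler_wpM2r => //; apply: ler_wpM2l.
  move=> hh.
  nra.
case: n n0 Smono S0 hE hv => [|j] // _ Smono S0 hE hv.
have -> : a j.+1 - w j.+1 = (P (a j.+1) - P (w j.+1)) + v j.+1.
  have -> : w j.+1 = P (T1 (P (w j))) by [].
  by rewrite PP /v [RHS]addrC addrA subrK.
apply: le_trans (ler_normD _ _) _.
apply: le_trans (lerD (hE j (leqnn _)) (hv j.+1 erefl)) _.
have hx : 0 <= `|x| by [].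
have Sn0 := S0 j.+1 erefl.
rewrite -/(S j.+1).
have -> : (j.+1)%:R = j%:R + 1 :> R by rewrite natr1.
have : 0 <= s ^+ 2 * S j.+1 * `|x| by apply: mulr_ge0 => //; apply: mulr_ge0 => //; exact: sqr_ge0.
nra.
Qed.

Lemma iter_contr (R : realType) (X : completeNormedModType R) (M : X -> X) n z :
  (forall z, `|M z| <= `|z|) -> `|ssrnat.iter n M z| <= `|z|.
Proof. by move=> hM; elim: n => [|n IH] //=; exact: le_trans (hM _) IH. Qed.

Theorem lemma5p2 (R : realType) (X : completeNormedModType R)
  (T : R -> X -> X) (D : set X) (L : X -> X)
  (M P : X -> X) (delta b : R) :
  is_C0_contraction_semigroup T ->
  is_generator T D L ->
  is_contraction_op M ->
  is_projection P ->
  0 < delta -> delta < 1 ->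
  (forall (n : nat) (x : X), (0 < n)%N ->
     `|ssrnat.iter n M x - P x| <= delta ^+ n * `|x|) ->
  0 <= b ->
  (forall (t : R) (x : X), 0 <= t -> `|P (T t (x - P x))| <= t * b * `|x|) ->
  (forall (t : R) (x : X), 0 <= t -> `|T t (P x) - P (T t (P x))| <= t * b * `|x|) ->
  (exists S : R -> X -> X, is_C0_semigroup S /\
     is_generator S [set x | D (P x)] (fun x => P (L (P x)))) ->
  forall (n : nat) (x : X), (0 < n)%N ->
    `|ssrnat.iter n (fun y => M (T (n%:R^-1) y)) x
      - ssrnat.iter n (fun y => P (T (n%:R^-1) (P y))) x|
    <= (delta ^+ n + b / n%:R
        + n%:R^-1 * (b * (2 + b) * (delta - delta ^+ n) / (1 - delta)) * expR (2 * b))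
       * `|x|.
Proof.
move=> [_ HT] _ [[linM _] hM] [[linP _] PP] d0 d1 Hn b0 H1 H2 _ n x n0.
have [M0 MD MB] := lin_props _ _ _ linM.
have [P0 PD PB] := lin_props _ _ _ linP.
have hP : forall z, `|P z| <= `|z|.
  move=> z.
  suff : `|P z| - `|z| <= 0 by lra.
  apply: (@le0_of_geom _ delta _ `|z|) => // k k0.
  have -> : P z = ssrnat.iter k M z - (ssrnat.iter k M z - P z).
    by rewrite opprB addrC subrK.
  have := ler_normB (ssrnat.iter k M z) (ssrnat.iter k M z - P z).
  have := iter_contr _ _ _ k z hM; have := Hn k z k0. rewrite mulrC. lra.
have MP : forall z, M (P z) = P z.
  move=> z; apply/eqP; rewrite -subr_eq0 -normr_eq0 eq_le normr_ge0 andbT.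
  apply: (@le0_of_geom _ delta _ (2 * `|z|)) => // k k0.
  have -> : M (P z) - P z = M (P z - ssrnat.iter k M z) + (ssrnat.iter k.+1 M z - P z).
    by rewrite MB /= addrA subrK.
  apply: le_trans (ler_normD _ _) _.
  have e1 := hM (P z - ssrnat.iter k M z).
  rewrite distrC in e1.
  have e2 := Hn k z k0.
  have e3 := Hn k.+1 z erefl.
  rewrite exprS in e3.
  have hk : 0 <= delta ^+ k by rewrite exprn_ge0 // ltW.
  have hz : 0 <= `|z| by [].
  have hkz := mulr_ge0 hk hz. nra.
have PM : forall z, P (M z) = P z.
  move=> z; apply/eqP; rewrite -subr_eq0 -normr_eq0 eq_le normr_ge0 andbT.
  apply: (@le0_of_geom _ delta _ (2 * `|z|)) => // k k0.
  have -> : P (M z) - P z = (P (M z) - ssrnat.iter k M (M z)) + (ssrnat.iter k.+1 M z - P z).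
    by rewrite iterSr addrA subrK.
  apply: le_trans (ler_normD _ _) _.
  have e1 := Hn k (M z) k0.
  rewrite distrC in e1.
  have e2 := hM z.
  have e3 := Hn k.+1 z erefl.
  rewrite exprS in e3.
  have hk : 0 <= delta ^+ k by rewrite exprn_ge0 // ltW.
  have hz : 0 <= `|z| by [].
  have hkz := mulr_ge0 hk hz.
  nra.
have hN : forall z, `|M z - P z| <= delta * `|z|.
  by move=> z; have := Hn 1 z erefl; rewrite expr1.
have t0 : 0 <= n%:R^-1 :> R by rewrite invr_ge0.
have [[linT _] hT] := HT _ t0.
have s0 : 0 <= n%:R^-1 * b by rewrite mulr_ge0.
have := core R X M P (T n%:R^-1) delta (n%:R^-1 * b) n x linM linP linT hM hT hP PP MP PM hN
  (fun z => H1 _ z t0) (fun z => H2 _ z t0) d0 d1 s0 n0.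
move/le_trans; apply; apply: ler_wpM2r => //.
set S := (delta - delta ^+ n) / (1 - delta).
have -> : b * (2 + b) * (delta - delta ^+ n) / (1 - delta) = b * (2 + b) * S.
  by rewrite /S !mulrA.
have S0 : 0 <= S.
  apply: divr_ge0; last lra.
  rewrite subr_ge0; exact: ler_iXnr n0 (ltW d0) (ltW d1).
have nn : n%:R != 0 :> R by rewrite pnatr_eq0 -lt0n.
have -> : (2 * (n%:R^-1 * b) + n%:R * (n%:R^-1 * b) ^+ 2) = n%:R^-1 * (b * (2 + b)).
  by field.
have e := expR_ge1Dx (2 * b).
have : 0 <= n%:R^-1 * (b * (2 + b)) * S.
  apply: mulr_ge0 => //; apply: mulr_ge0; [by rewrite invr_ge0|apply: mulr_ge0 => //; lra].
rewrite [b / _]mulrC. set K := n%:R^-1 * (b * (2 + b)) * S.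
have -> : n%:R^-1 * (b * (2 + b) * S) = K by rewrite /K !mulrA.
nra.
Qed.
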